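(* Let $\mathcal C$ be a hereditary class of graphs with infinite VC-dimension. Then $\mathcal C$ contains all bipartite graphs, or $\mathcal C$ contains all co-bipartite graphs, or $\mathcal C$ contains all split graphs.
   Context: A class of graphs is hereditary if it is closed under isomorphism and under taking induced subgraphs. For a graph $G$ and $v\in V(G)$, $N[v]$ is the closed neighbourhood. A set $X\subseteq V(G)$ is shattered if for every $S\subseteq X$ there is a vertex $v$ with $N[v]\cap X=S$; the VC-dimension of $G$ is the largest size of a shattered set; a class has infinite VC-dimension if the VC-dimensions of its members are unbounded. A co-bipartite graph is the complement of a bipartite graph (its vertex set can be partitioned into two cliques). A split graph is a graph whose vertex set can be partitioned into a clique and a stable set. *)

(* Defs.v *)
From mathcomp Require Import all_boot.
Set Implicit Arguments. Unset Strict Implicit. Unset Printing Implicit Defensive.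

Record sgraph := SGraph {
  vert :> finType;
  adj : rel vert;
  adj_sym : symmetric adj;
  adj_irrefl : irreflexive adj }.

Definition isomorphic (G H : sgraph) : Prop :=
  exists f : vert G -> vert H, bijective f /\ forall x y, adj (f x) (f y) = adj x y.

Section Induced.
Variables (G : sgraph) (S : {set vert G}).
Definition ind_vert : finType := {x : vert G | x \in S}.
Definition ind_adj : rel ind_vert := fun x y => adj (val x) (val y).
Lemma ind_adj_sym : symmetric ind_adj.
Proof. by move=> x y; rewrite /ind_adj adj_sym. Qed.
Lemma ind_adj_irrefl : irreflexive ind_adj.
Proof. by move=> x; rewrite /ind_adj adj_irrefl. Qed.
Definition induced : sgraph := SGraph ind_adj_sym ind_adj_irrefl.
End Induced.

Definition hereditary (C : sgraph -> Prop) : Prop :=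
  (forall G H, isomorphic G H -> C G -> C H) /\
  (forall G (S : {set vert G}), C G -> C (induced S)).

Definition cnbhd (G : sgraph) (v : vert G) : {set vert G} :=
  [set u | (u == v) || adj v u].

Definition shattered (G : sgraph) (X : {set vert G}) : Prop :=
  forall S : {set vert G}, S \subset X -> exists v, cnbhd v :&: X = S.

Definition infinite_VC (C : sgraph -> Prop) : Prop :=
  forall k : nat, exists G : sgraph, C G /\
    exists X : {set vert G}, shattered X /\ k <= #|X|.

Definition stable (G : sgraph) (A : {set vert G}) : Prop :=
  forall x y, x \in A -> y \in A -> ~~ adj x y.
Definition clique (G : sgraph) (A : {set vert G}) : Prop :=
  forall x y, x \in A -> y \in A -> x != y -> adj x y.

Definition vpart2 (G : sgraph) (A B : {set vert G}) : Prop :=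
  [disjoint A & B] /\ A :|: B = setT.

Definition bipartite (G : sgraph) : Prop :=
  exists A B : {set vert G}, vpart2 A B /\ stable A /\ stable B.
Definition cobipartite (G : sgraph) : Prop :=
  exists A B : {set vert G}, vpart2 A B /\ clique A /\ clique B.
Definition split_graph (G : sgraph) : Prop :=
  exists A B : {set vert G}, vpart2 A B /\ clique A /\ stable B.

(* Main.v *)
Require Import Defs.
From mathcomp Require Import all_boot zify.
From Stdlib Require Import Classical.
Set Implicit Arguments. Unset Strict Implicit. Unset Printing Implicit Defensive.

Definition hom (G : sgraph) (c : bool) (A : {set vert G}) :=
  forall x y, x \in A -> y \in A -> x != y -> adj x y = c.

Lemma hom_sub (G : sgraph) c (A B : {set vert G}) : B \subset A -> hom c A -> hom c B.
Proof. move=> /subsetP sBA hA x y /sBA xA /sBA yA; exact: hA. Qed.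

Lemma ramsey_aux (G : sgraph) k : forall s t (A : {set vert G}),
  s + t <= k -> 2 ^ (s + t) <= #|A| ->
  exists B : {set vert G}, B \subset A /\ ((s <= #|B| /\ hom true B) \/ (t <= #|B| /\ hom false B)).
Proof.
elim: k => [|k IH] s t A.
  move=> h _; exists (set0 : {set vert G}); split; first exact: sub0set.
  left; split; first lia. by move=> x y; rewrite inE.
case: s => [|s]; first by move=> _ _; exists (set0 : {set vert G}); split; [exact: sub0set|left; split=>//; move=> x y; rewrite inE].
case: t => [|t]; first by move=> _ _; exists (set0 : {set vert G}); split; [exact: sub0set|right; split=>//; move=> x y; rewrite inE].
move=> hk hA.
have : 0 < #|A| by apply: leq_trans hA; rewrite expn_gt0.
case/card_gt0P => x xA.
set A' := A :\ x.
set N := A' :&: [set y | adj x y]. set M := A' :\: [set y | adj x y].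
have hNM : #|N| + #|M| = #|A'| by rewrite cardsID.
have hA' : #|A| = #|A'|.+1 by rewrite (cardsD1 x A) xA.
have xN : x \notin N by rewrite !inE eqxx.
have xM : x \notin M by rewrite !inE eqxx andbF.
have sNA : N \subset A by apply/subsetP=> y; rewrite !inE => /andP[/andP[_ ->]].
have sMA : M \subset A by apply/subsetP=> y; rewrite !inE => /andP[_ /andP[_ ->]].
have e1 : 2 ^ (s.+1 + t.+1) = 2 * 2 ^ (s + t.+1) by rewrite addSn expnS.
have e2 : 2 ^ (s.+1 + t) = 2 ^ (s + t.+1) by rewrite addSn addnS.
rewrite e1 in hA.
have : 2 ^ (s + t.+1) <= #|N| \/ 2 ^ (s.+1 + t) <= #|M| by rewrite e2; lia.
case=> [hN|hM].
- have [B [sBN [[hs hB]|[ht hB]]]] := IH s t.+1 N (ltac:(lia)) hN.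
  + have xB : x \notin B by apply: contra xN; apply: (subsetP sBN).
    exists (x |: B); split.
      by apply/subsetP=> y; rewrite !inE => /orP[/eqP->//|/(subsetP sBN)/(subsetP sNA)].
    left; split; first by rewrite cardsU1 xB.
    move=> y z; rewrite !inE => /orP[/eqP->|yB] /orP[/eqP->|zB]; rewrite ?eqxx //.
    * by move=> _; move: (subsetP sBN z zB); rewrite !inE => /andP[_ ].
    * by move=> _; rewrite adj_sym; move: (subsetP sBN y yB); rewrite !inE => /andP[_ ].
    * exact: hB.
  + exists B; split; last by right.
    exact: subset_trans sBN sNA.
- have [B [sBM [[hs hB]|[ht hB]]]] := IH s.+1 t M (ltac:(lia)) hM.
  + exists B; split; last by left.
    exact: subset_trans sBM sMA.
  + have xB : x \notin B by apply: contra xM; apply: (subsetP sBM).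
    exists (x |: B); split.
      by apply/subsetP=> y; rewrite !inE => /orP[/eqP->//|/(subsetP sBM)/(subsetP sMA)].
    right; split; first by rewrite cardsU1 xB.
    move=> y z; rewrite !inE => /orP[/eqP->|yB] /orP[/eqP->|zB]; rewrite ?eqxx //.
    * by move=> _; move: (subsetP sBM z zB); rewrite !inE => /andP[/negbTE ].
    * by move=> _; rewrite adj_sym; move: (subsetP sBM y yB); rewrite !inE => /andP[/negbTE ].
    * exact: hB.
Qed.

Lemma ramsey (G : sgraph) m (A : {set vert G}) : 2 ^ (m + m) <= #|A| ->
  exists (B : {set vert G}) c, B \subset A /\ m <= #|B| /\ hom c B.
Proof.
move=> h; have [B [sBA [[h1 h2]|[h1 h2]]]] := ramsey_aux (leqnn _) h.
- by exists B, true.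
- by exists B, false.
Qed.

Lemma embed (T U : finType) (A : {set U}) : #|T| <= #|A| ->
  exists e : T -> U, injective e /\ forall t, e t \in A.
Proof.
move=> h.
exists (fun t => enum_val (widen_ord h (enum_rank t))); split.
  move=> x y /enum_val_inj /(congr1 val) /= /val_inj; exact: enum_rank_inj.
by move=> t; exact: enum_valP.
Qed.

Lemma embed_C (C : sgraph -> Prop) (G H : sgraph) (phi : vert H -> vert G) :
  hereditary C -> C G -> injective phi -> (forall u w, adj (phi u) (phi w) = adj u w) -> C H.
Proof.
move=> [hiso hind] CG phiI phiA.
set S := [set phi u | u in [set: vert H]].
have CS := hind G S CG.
pose g (u : vert H) : vert (induced S) := exist (fun x => x \in S) (phi u) (imset_f phi (in_setT u)).
have gI : injective g by move=> u w /(congr1 val) /= /phiI.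
have gB : bijective g.
  apply: (@inj_card_bij _ _ g gI).
  rewrite /= /ind_vert card_sig.
  have -> : #|[pred x | x \in S]| = #|S| by apply: eq_card.
  by rewrite card_imset // cardsT.
case: gB => g' gK g'K.
apply: (hiso _ _ _ CS).
exists g'; split; first by exists g.
move=> x y.
rewrite -{2}(g'K x) -{2}(g'K y) /= /ind_adj /=.
by rewrite phiA.
Qed.

Definition Tp (m : nat) : finType :=
  ({ffun 'I_(2 ^ (m + m)) -> bool} * ('I_m.+1 * 'I_(2 ^ (m + m)).+1))%type.

Lemma construct (G : sgraph) (X : {set vert G}) m :
  shattered X -> 2 ^ (#|Tp m| + #|Tp m|) <= #|X| ->
  exists c1 c2, forall (H : sgraph) (A : {set vert H}),
    #|vert H| <= m -> hom c1 A -> hom c2 (~: A) ->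
    exists phi : vert H -> vert G, injective phi /\ forall u w, adj (phi u) (phi w) = adj u w.
Proof.
move=> shX hX.
set n := 2 ^ (m + m).
have [X' [c1 [sX' [hK hX']]]] := ramsey hX.
have [e [eI eX']] := embed hK.
have eX : forall p, e p \in X := fun p => subsetP sX' _ (eX' p).
pose S (i : 'I_n) := [set e p | p in [set p : Tp m | p.1 i]].
have exv : forall i, exists v, cnbhd v :&: X == S i.
  move=> i; have [v hv] := shX (S i) (ltac:(apply/subsetP => y /imsetP [p _ ->]; exact: eX)).
  by exists v; rewrite hv.
pose v i := xchoose (exv i).
have vS : forall i, cnbhd (v i) :&: X = S i := fun i => eqP (xchooseP (exv i)).
have key : forall p i, (e p \in cnbhd (v i)) = p.1 i.
  move=> p i; have h : (e p \in cnbhd (v i) :&: X) = (e p \in S i) by rewrite vS.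
  by move: h; rewrite inE eX andbT => ->; rewrite /S mem_imset // inE.
have vI : injective v.
  move=> i j hij; have := key ([ffun k => k == i], (ord0, ord0)) j.
  by rewrite -hij key /= !ffunE eqxx => /esym/eqP ->.
pose V := [set v i | i in [set: 'I_n]].
have cV : #|V| = n by rewrite card_imset // cardsT card_ord.
have [W [c2 [sWV [hW hWh]]]] := ramsey (G:=G) (m:=m) (A:=V) (ltac:(by rewrite cV)).
pose I := [set i | v i \in W].
have hI : m <= #|I|.
  apply: leq_trans hW _.
  have : W \subset v @: I.
    apply/subsetP => y yW; have := subsetP sWV y yW; case/imsetP => i _ yi.
    by apply/imsetP; exists i => //; rewrite inE -yi.
  move/subset_leq_card => h; apply: leq_trans h _; exact: leq_imset_card.
have avoid : forall f g, exists s : 'I_n.+1, e (f, (g, s)) \notin V.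
  move=> f g; case: (boolP [exists s, e (f,(g,s)) \notin V]) => [/existsP //| /existsPn hs].
  have : #|'I_n.+1| <= #|V|.
    have : [set e (f,(g,s)) | s in [set: 'I_n.+1]] \subset V.
      by apply/subsetP => y /imsetP [s _ ->]; move: (hs s); rewrite negbK.
    move/subset_leq_card; rewrite card_imset ?cardsT //.
    by move=> s1 s2 /eI [].
  by rewrite card_ord cV ltnn.
exists c1, c2 => H A hH hA hB.
have [beta [bI bIm]] := embed (T:=vert H) (A:=I) (leq_trans hH hI).
have [gam [gI _]] := embed (T:=vert H) (A:=[set: 'I_m.+1]) (ltac:(rewrite cardsT card_ord; lia)).
pose f u := [ffun i => [exists w, (beta w == i) && (w \notin A) && adj u w]].
pose s u := xchoose (avoid (f u) (gam u)).
have sV : forall u, e (f u, (gam u, s u)) \notin V := fun u => xchooseP (avoid _ _).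
pose phi u := if u \in A then e (f u, (gam u, s u)) else v (beta u).
have fuw : forall u w, w \notin A -> f u (beta w) = adj u w.
  move=> u w wA; rewrite ffunE; apply/existsP/idP => [[w' /andP[/andP[/eqP/bI -> _] ->]] // | h].
  by exists w; rewrite eqxx wA h.
have cross : forall u w, u \in A -> w \notin A -> adj (phi u) (phi w) = adj u w.
  move=> u w uA wA; rewrite /phi uA (negbTE wA) adj_sym.
  have neq : (e (f u, (gam u, s u)) == v (beta w)) = false.
    apply/negbTE; apply: contra (sV u) => /eqP ->; exact: imset_f (in_setT _).
  have := key (f u, (gam u, s u)) (beta w).
  by rewrite /= fuw // /cnbhd inE neq /= => ->.
exists phi; split.
  move=> u w; rewrite /phi; case: (boolP (u \in A)) => uA; case: (boolP (w \in A)) => wA.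
  - by move/eI; case=> _ /gI ->.
  - by move=> h; move: (sV u); rewrite h imset_f ?in_setT.
  - by move=> h; move: (sV w); rewrite -h imset_f ?in_setT.
  - by move/vI/bI.
move=> u w; case: (eqVneq u w) => [->|uw]; first by rewrite !adj_irrefl.
case: (boolP (u \in A)) => uA; case: (boolP (w \in A)) => wA.
- rewrite /phi uA wA (hA u w uA wA uw).
  apply: hX'; rewrite ?eX' //.
  by apply: contra_neq uw => /eI; case=> _ /gI ->.
- exact: cross.
- by rewrite adj_sym [in RHS]adj_sym; apply: cross.
- rewrite /phi (negbTE uA) (negbTE wA) (hB u w) ?inE //.
  apply: hWh.
  + by have := bIm u; rewrite inE.
  + by have := bIm w; rewrite inE.
  + by apply: contra_neq uw => /vI/bI.
Qed.

Definition Pc (C : sgraph -> Prop) (c1 c2 : bool) (m : nat) :=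
  forall (H : sgraph) (A : {set vert H}),
    #|vert H| <= m -> hom c1 A -> hom c2 (~: A) -> C H.

Lemma stepP (C : sgraph -> Prop) : hereditary C -> infinite_VC C ->
  forall m, exists c1 c2, Pc C c1 c2 m.
Proof.
move=> hC hV m.
have [G [CG [X [shX hX]]]] := hV (2 ^ (#|Tp m| + #|Tp m|)).
have [c1 [c2 h]] := construct shX hX.
exists c1, c2 => H A hH hA hB.
have [phi [phiI phiA]] := h H A hH hA hB.
exact: (embed_C hC CG phiI phiA).
Qed.

Lemma Pc_mono C c1 c2 m m' : m <= m' -> Pc C c1 c2 m' -> Pc C c1 c2 m.
Proof. move=> hm h H A hH; apply: h; exact: leq_trans hH hm. Qed.

Lemma allP (C : sgraph -> Prop) : hereditary C -> infinite_VC C ->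
  exists c1 c2, forall m, Pc C c1 c2 m.
Proof.
move=> hC hV.
destruct (classic (forall m, Pc C true true m)) as [h|h1]; first by exists true, true.
destruct (classic (forall m, Pc C true false m)) as [h|h2]; first by exists true, false.
destruct (classic (forall m, Pc C false true m)) as [h|h3]; first by exists false, true.
destruct (classic (forall m, Pc C false false m)) as [h|h4]; first by exists false, false.
case: (not_all_ex_not _ _ h1) => m1 n1.
case: (not_all_ex_not _ _ h2) => m2 n2.
case: (not_all_ex_not _ _ h3) => m3 n3.
case: (not_all_ex_not _ _ h4) => m4 n4.
have [c1 [c2 hP]] := stepP hC hV (m1 + m2 + m3 + m4).
exfalso; case: c1 hP; case: c2 => hP.
- by apply: n1; apply: Pc_mono hP; lia.
- by apply: n2; apply: Pc_mono hP; lia.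
- by apply: n3; apply: Pc_mono hP; lia.
- by apply: n4; apply: Pc_mono hP; lia.
Qed.

Lemma compl_part (G : sgraph) (A B : {set vert G}) : vpart2 A B -> ~: A = B.
Proof.
move=> [dAB uAB]; apply/setP => x; rewrite inE; case xA: (x \in A).
  by rewrite (disjointFr dAB xA).
have : x \in A :|: B by rewrite uAB inE.
by rewrite inE xA.
Qed.

Lemma hom_clique (G : sgraph) (A : {set vert G}) : clique A -> hom true A.
Proof. by move=> h x y xA yA xy; apply: h. Qed.

Lemma hom_stable (G : sgraph) (A : {set vert G}) : stable A -> hom false A.
Proof. by move=> h x y xA yA xy; apply/negbTE; apply: h. Qed.

Theorem mainTheorem4 (C : sgraph -> Prop) :
  hereditary C -> infinite_VC C ->
  (forall G, bipartite G -> C G) \/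
  (forall G, cobipartite G -> C G) \/
  (forall G, split_graph G -> C G).
Proof.
move=> hC hV.
have [c1 [c2 hP]] := allP hC hV.
case: c1 hP; case: c2 => hP.
- right; left => G [A [B [hp [hA hB]]]].
  apply: (hP #|vert G| G A (leqnn _) (hom_clique hA)).
  by rewrite (compl_part hp); apply: hom_clique.
- right; right => G [A [B [hp [hA hB]]]].
  apply: (hP #|vert G| G A (leqnn _) (hom_clique hA)).
  by rewrite (compl_part hp); apply: hom_stable.
- right; right => G [A [B [hp [hA hB]]]].
  apply: (hP #|vert G| G B (leqnn _) (hom_stable hB)).
  by rewrite -(compl_part hp) setCK; apply: hom_clique.
- left => G [A [B [hp [hA hB]]]].
  apply: (hP #|vert G| G A (leqnn _) (hom_stable hA)).
  by rewrite (compl_part hp); apply: hom_stable.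
Qed.
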